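(* Let $m\geq 1$ and $0\leq k\leq m$ be integers, and let $H$ be $\mathrm{Sym}(m)$ or $\mathrm{Alt}(m)$ acting on the set of $k$-element subsets of $\{1,\ldots,m\}$. Let $g\in H$ and suppose that, in its natural action on $\{1,\ldots,m\}$, $g$ has a cycle $C$ of length $m'$. Then for every integer $k'$ with $0\le k'\le m'$, the $k$-subsets of $\{1,\ldots,m\}$ that contain exactly $k'$ elements of $C$ lie in at least $\binom{m'}{k'}/m'$ distinct cycles of $g$ in its action on $k$-subsets.
   Context: A ''cycle of $g$'' on a set means an orbit of $\langle g\rangle$ on that set (fixed points count as cycles of length $1$). *)

(* Defs.v *)
From mathcomp Require Import all_boot all_order all_algebra all_fingroup all_solvable alt.
Set Implicit Arguments. Unset Strict Implicit. Unset Printing Implicit Defensive.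

Definition nat_cycle (m : nat) (g : {perm 'I_m}) (x : 'I_m) : {set 'I_m} :=
  orbit 'P <[g]> x.

Definition set_cycle (m : nat) (g : {perm 'I_m}) (A : {set 'I_m}) : {set {set 'I_m}} :=
  orbit 'P^* <[g]> A.

Definition ksub_meeting (m k k' : nat) (C : {set 'I_m}) : {set {set 'I_m}} :=
  [set A : {set 'I_m} | (#|A| == k) && (#|A :&: C| == k')].

(* Main.v *)
Require Import Defs.
From mathcomp Require Import all_boot all_order all_algebra all_fingroup all_solvable alt.
Import GRing.Theory Num.Theory.

Lemma nat_cycleE (m : nat) (g : {perm 'I_m}) x : nat_cycle g x = porbit g x.
Proof.
by rewrite porbit.unlock /nat_cycle /orbit.
Qed.

Lemma porbit_closed (T : finType) (g : {perm T}) x i y :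
  y \in porbit g x -> (g ^+ i)%g y \in porbit g x.
Proof.
case/porbitP=> j ->; rewrite -permM -expgD; exact: mem_porbit.
Qed.

Lemma porbit_fixq (T : finType) (g : {perm T}) x q y :
  y \in porbit g x -> (g ^+ (q * #|porbit g x|))%g y = y.
Proof.
case/porbitP=> j ->.
elim: q => [|q IH]; first by rewrite mul0n expg0 perm1.
have E : (g ^+ #|porbit g x|)%g ((g ^+ j)%g x) = (g ^+ j)%g x.
  by rewrite -permM -expgD addnC expgD permM [(g ^+ #|_|)%g x]permX iter_porbit.
by rewrite mulSn expgD permM E IH.
Qed.

Lemma porbit_mod (T : finType) (g : {perm T}) x i y :
  y \in porbit g x ->
  (g ^+ i)%g y = (g ^+ (i %% #|porbit g x|))%g y.
Proof.
move=> Hy; rewrite {1}(divn_eq i #|porbit g x|) expgD permM porbit_fixq //.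
Qed.

Lemma imset_closed (T : finType) (h : {perm T}) (C A : {set T}) :
  (forall y, y \in C -> h y \in C) ->
  (h @: A) :&: C = h @: (A :&: C).
Proof.
move=> hC.
have hCC : h @: C = C.
  apply/eqP; rewrite eqEcard card_imset; last exact: perm_inj.
  rewrite leqnn andbT; apply/subsetP=> _ /imsetP[y Hy ->]; exact: hC.
by rewrite imsetI ?hCC //; move=> a b _ _; apply: perm_inj.
Qed.

Lemma setactPE (T : finType) (R : {set T}) (h : {perm T}) :
  setact 'P R h = h @: R.
Proof. by apply: eq_imset => z. Qed.

Theorem lemma3p1 (m k : nat) (H : {set {perm 'I_m}}) (g : {perm 'I_m})
    (x : 'I_m) (m' k' : nat) :
  (1 <= m)%N -> (k <= m)%N ->
  (H = ('Sym_('I_m))%g \/ H = ('Alt_('I_m))%g) ->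
  g \in H ->
  #|nat_cycle g x| = m' ->
  (k' <= m')%N -> (k' <= k)%N -> (k - k' <= m - m')%N ->
  (('C(m', k')%:R / m'%:R : rat) <=
     #|[set set_cycle g A | A in ksub_meeting k k' (nat_cycle g x)]|%:R)%R.
Proof.
move=> _ _ _ _ Hm' Hk'm' Hk'k Hkk.
rewrite nat_cycleE in Hm' *.
set C := porbit g x in Hm' *.
set S := ksub_meeting k k' C.
set Q := [set set_cycle g A | A in S].
have m'gt0 : (0 < m')%N by rewrite -Hm' card_gt0; apply/set0Pn; exists x; exact: porbit_id.
set T := [set B : {set 'I_m} | B \subset C & #|B| == k'].
pose f := fun A : {set 'I_m} => A :&: C.
pose F := fun p : {set {set 'I_m}} * 'I_m' =>
   ((g ^+ p.2)%g @: (odflt set0 [pick B in p.1] :&: C)).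
have TfS : T \subset f @: S.
  apply/subsetP=> B; rewrite inE => /andP[BC /eqP cB].
  have : (0 < #|[set D : {set 'I_m} | D \subset ~: C & #|D| == k - k']|)%N.
    by rewrite cards_draws bin_gt0 cardsCs card_ord setCK Hm'.
  case/card_gt0P=> D; rewrite inE => /andP[DC /eqP cD].
  have BD : B :&: D = set0.
    apply/setP=> y; rewrite !inE; apply/negbTE/andP=> -[yB yD].
    by move: (subsetP DC y yD); rewrite inE (subsetP BC y yB).
  have DC0 : D :&: C = set0.
    apply/setP=> y; rewrite !inE; apply/negbTE/andP=> -[yD yC].
    by move: (subsetP DC y yD); rewrite inE yC.
  have fBD : f (B :|: D) = B by rewrite /f setIUl DC0 setU0; apply/setIidPl.
  apply/imsetP; exists (B :|: D) => //.
  rewrite inE -/(f _) fBD cB eqxx andbT cardsU BD cards0 subn0 cB cD subnKC //.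
have fSI : f @: S \subset F @: setX Q [set: 'I_m'].
  apply/subsetP=> _ /imsetP[A AS ->].
  pose O := set_cycle g A.
  have OQ : O \in Q by apply/imsetP; exists A.
  have AO : A \in O by exact: orbit_refl.
  set R := odflt set0 [pick B in O].
  have RO : R \in O.
    rewrite /R; case: pickP => [//|/(_ A)]; by rewrite AO.
  have : A \in orbit 'P^* <[g]> R.
    by rewrite orbit_sym.
  case/orbitP=> h /cycleP[i ->] <-.
  apply/imsetP; exists (O, Ordinal (ltn_pmod i m'gt0)); first by rewrite !inE OQ.
  rewrite /F /f /= setactPE imset_closed; last by move=> y; apply: porbit_closed.
  apply: eq_in_imset => y; rewrite inE => /andP[_ yC].
  by rewrite (@porbit_mod _ g x i y yC) Hm'.
have : ('C(m', k') <= #|Q| * m')%N.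
  rewrite -Hm' -cards_draws Hm' (leq_trans (subset_leq_card TfS)) //.
  rewrite (leq_trans (subset_leq_card fSI)) // (leq_trans (leq_imset_card _ _)) //.
  by rewrite cardsX cardsT card_ord.
move=> Hle.
rewrite ler_pdivrMr ?ltr0n // -natrM ler_nat //.
Qed.
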